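(* (i) For every family $(X_j)_{j\in J}$ of pseudotopological spaces, the natural map $\pi_0^{\mathrm{ps}}\big(\prod_{j} X_j\big)\to\prod_j\pi_0^{\mathrm{ps}}X_j$, sending the path component of $(x_j)_j$ to the family of path components of the $x_j$, is an isomorphism in $\mathsf{PsTop}$ (i.e. $\pi_0^{\mathrm{ps}}$ preserves products). (ii) For every finite family $X_1,\dots,X_n$ of epitopological spaces, the analogous natural map $\pi_0^{\mathrm{epi}}(X_1\times\dots\times X_n)\to\pi_0^{\mathrm{epi}}X_1\times\dots\times\pi_0^{\mathrm{epi}}X_n$ is an isomorphism in $\mathsf{EpiTop}$ (i.e. $\pi_0^{\mathrm{epi}}$ preserves finite products).
   Context: For a set $X$, $U(X)$ is the set of ultrafilters on $X$, $\dot x$ the principal ultrafilter at $x$; for $f\colon X\to Y$ and a filter $\mathscr F$ on $X$, $f_*\mathscr F=\{S\subset Y:f^{-1}(S)\in\mathscr F\}$. A pseudotopological space is a set $X$ with a relation $u\subset U(X)\times X$ containing all $(\dot x,x)$; write $\mathscr U\to x$ for $(\mathscr U,x)\in u$; for a filter $\mathscr F$, $\mathscr F\to x$ means every ultrafilter containing $\mathscr F$ converges to $x$. Continuous maps: $\mathscr U\to x\Rightarrow f_*\mathscr U\to f(x)$; this gives the category $\mathsf{PsTop}$. Initial structure for maps $f_j\colon X\to X_j$: $\mathscr U\to x$ iff $(f_j)_*\mathscr U\to f_j(x)$ for all $j$; products carry the initial structure w.r.t. projections. Final structure for maps $f_j\colon X_j\to X$: $\mathscr U\to x$ iff $\mathscr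 U=\dot x$ or $\mathscr U=(f_j)_*\mathscr V$, $x=f_j(z)$ for some $j$ and some $\mathscr V\to z$ in $X_j$. Topological spaces are regarded as pseudotopological spaces via ultrafilter convergence. For pseudotopological $X,Y$, $Y^X$ is the set of continuous maps $X\to Y$ where a filter $\mathscr F$ converges to $f$ iff for every filter $\mathscr G\to x$ in $X$, $\mathrm{ev}_*(\mathscr F\times\mathscr G)\to f(x)$ ($\mathscr F\times\mathscr G$ generated by the sets $F\times G$, $\mathrm{ev}(g,x)=g(x)$). A pseudotopological space is epitopological if its structure is initial w.r.t. some family of maps $X\to Z_j^{Y_j}$ with $Y_j,Z_j$ topological spaces; $\mathsf{EpiTop}$ is the full subcategory of such spaces; products in $\mathsf{EpiTop}$ are the products in $\mathsf{PsTop}$. A path in $X$ is a continuous map $[0,1]\to X$ ($[0,1]$ with the usual topology). For a pseudotopological space $X$, $\pi_0^{\mathrm{ps}}X$ is the set of path components of $X$ with the final pseudotopology w.r.t. the natural projection from $X$. For an epitopological space $X$, $\pi_0^{\mathrm{epi}}X$ is the set of path components with the quotient epitopology, i.e. the smallest (fewest convergent pairs) epitopological structure making the projection continuous. *)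

(* Defs.v *)
From Stdlib Require Import Reals.

Set Implicit Arguments.

Definition setsys (X : Type) := (X -> Prop) -> Prop.

(* A filter (not required to be proper). *)
Definition is_filter {X : Type} (F : setsys X) : Prop :=
  F (fun _ => True) /\
  (forall A B, F A -> F B -> F (fun x => A x /\ B x)) /\
  (forall A B : X -> Prop, (forall x, A x -> B x) -> F A -> F B).

Definition is_proper_filter {X : Type} (F : setsys X) : Prop :=
  is_filter F /\ ~ F (fun _ => False).

Definition is_ultra {X : Type} (U : setsys X) : Prop :=
  is_proper_filter U /\ forall A, U A \/ U (fun x => ~ A x).

Definition principal {X : Type} (x : X) : setsys X := fun A => A x.

Definition push {X Y : Type} (f : X -> Y) (F : setsys X) : setsys Y :=
  fun S => F (fun x => S (f x)).

Definition finer {X : Type} (F U : setsys X) : Prop := forall A, F A -> U A.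

Definition prodF {X Y : Type} (F : setsys X) (G : setsys Y) : setsys (X * Y) :=
  fun W => exists A B, F A /\ G B /\ forall a b, A a -> B b -> W (a, b).

(* A (raw) convergence space: a set with a relation between set systems and
   points.  Pseudotopological spaces are those satisfying [PsAxioms]. *)
Record PsSpace := { pt :> Type; conv : setsys pt -> pt -> Prop }.

Definition PsAxioms (X : PsSpace) : Prop :=
  (forall U x, conv X U x -> is_ultra U) /\
  (forall x, conv X (principal x) x).

Definition fconv (X : PsSpace) (F : setsys X) (x : X) : Prop :=
  forall U, is_ultra U -> finer F U -> conv X U x.

Definition continuous (X Y : PsSpace) (f : X -> Y) : Prop :=
  forall U x, conv X U x -> conv Y (push f U) (f x).

Definition ps_iso (X Y : PsSpace) (f : X -> Y) : Prop :=
  exists g : Y -> X, (forall x, g (f x) = x) /\ (forall y, f (g y) = y) /\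
    continuous X Y f /\ continuous Y X g.

Definition prodPs (J : Type) (X : J -> PsSpace) : PsSpace :=
  {| pt := forall j, X j;
     conv := fun U x => is_ultra U /\
               forall j, conv (X j) (push (fun y : forall j, X j => y j) U) (x j) |}.

Record TopSpace := { tpt :> Type; is_open : (tpt -> Prop) -> Prop }.

Definition TopAxioms (T : TopSpace) : Prop :=
  is_open T (fun _ => True) /\
  (forall A B, is_open T A -> is_open T B -> is_open T (fun x => A x /\ B x)) /\
  (forall (I : Type) (A : I -> tpt T -> Prop), (forall i, is_open T (A i)) ->
      is_open T (fun x => exists i, A i x)).

Definition topPs (T : TopSpace) : PsSpace :=
  {| pt := tpt T;
     conv := fun U x => is_ultra U /\ forall O, is_open T O -> O x -> U O |}.

Definition fspace (X Y : PsSpace) : PsSpace :=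
  {| pt := { f : X -> Y | continuous X Y f };
     conv := fun U f => is_ultra U /\
       forall (G : setsys X) (x : X), is_filter G -> fconv X G x ->
         fconv Y (push (fun p : { f : X -> Y | continuous X Y f } * X =>
                           proj1_sig (fst p) (snd p)) (prodF U G))
               (proj1_sig f x) |}.

(* epitopological: initial w.r.t. a family of maps X -> Z_i^{Y_i} with
   Y_i, Z_i topological *)
Definition is_epitop (X : PsSpace) : Prop :=
  exists (I : Type) (Y Z : I -> TopSpace)
         (h : forall i, X -> fspace (topPs (Y i)) (topPs (Z i))),
    (forall i, TopAxioms (Y i) /\ TopAxioms (Z i)) /\
    forall U x, conv X U x <->
      (is_ultra U /\
       forall i, conv (fspace (topPs (Y i)) (topPs (Z i))) (push (h i) U) (h i x)).

Definition unitI : TopSpace :=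
  {| tpt := { t : R | (0 <= t <= 1)%R };
     is_open := fun O => forall t, O t -> exists eps, (0 < eps)%R /\
        forall s, (Rabs (proj1_sig s - proj1_sig t) < eps)%R -> O s |}.

Lemma unitI0_proof : (0 <= 0 <= 1)%R.
Proof. split; [apply Rle_refl | apply Rle_0_1]. Qed.
Lemma unitI1_proof : (0 <= 1 <= 1)%R.
Proof. split; [apply Rle_0_1 | apply Rle_refl]. Qed.
Definition i0 : unitI := exist _ 0%R unitI0_proof.
Definition i1 : unitI := exist _ 1%R unitI1_proof.

Definition pathrel (X : PsSpace) (x y : X) : Prop :=
  exists p : unitI -> X, continuous (topPs unitI) X p /\ p i0 = x /\ p i1 = y.

Definition pcomp (X : PsSpace) (x : X) : X -> Prop := fun y => pathrel X x y.

Definition pi0car (X : PsSpace) : Type := { C : X -> Prop | exists x, C = pcomp X x }.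

Definition pi0proj (X : PsSpace) (x : X) : pi0car X :=
  exist _ (pcomp X x) (ex_intro _ x eq_refl).

(* pi_0^ps : final pseudotopology w.r.t. the projection *)
Definition pi0ps (X : PsSpace) : PsSpace :=
  {| pt := pi0car X;
     conv := fun U c => U = principal c \/
        exists V x, conv X V x /\ c = pi0proj X x /\ U = push (pi0proj X) V |}.

(* pi_0^epi : the smallest epitopological structure making the projection
   continuous (intersection of all such structures) *)
Definition pi0epi (X : PsSpace) : PsSpace :=
  {| pt := pi0car X;
     conv := fun U c => is_ultra U /\
       forall s : setsys (pi0car X) -> pi0car X -> Prop,
         PsAxioms {| pt := pi0car X; conv := s |} ->
         is_epitop {| pt := pi0car X; conv := s |} ->
         continuous X {| pt := pi0car X; conv := s |} (pi0proj X) ->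
         s U c |}.

(* Main.v *)
Require Import Defs.
From Stdlib Require Import Reals.
From Stdlib Require Import Classical ClassicalEpsilon FunctionalExtensionality PropExtensionality ProofIrrelevance List Lia Arith.
From mathcomp Require filter classical_sets.


Lemma ult (X : Type) (F : setsys X) : is_filter F -> ~ F (fun _ => False) ->
  exists U, is_ultra U /\ finer F U.
Proof.
  intros [HT [HI HS]] Hne.
  assert (PF : @filter.ProperFilter X F).
  { constructor. exact Hne. constructor. exact HT.
    intros A B; apply HI. intros A B H; apply HS; exact H. }
  destruct (filter.ultraFilterLemma PF) as [G [UG FG]].
  exists G. split; [|exact FG].
  destruct UG as [[Gne [GT GI GS]] Gmax].
  assert (Gf : is_filter G).
  { split; [exact GT|split]. intros A B; apply GI. intros A B H; apply GS; exact H. }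
  split; [split; assumption|].
  intros A. destruct (classic (G (fun x => ~ A x))) as [H|H]; [right; exact H|left].
  set (G' := fun S : X -> Prop => exists C, G C /\ forall x, C x -> A x -> S x).
  assert (PG' : @filter.ProperFilter X G').
  { constructor.
    - intros [C [GC HC]]. apply H. apply (GS C); [|exact GC]. intros x Cx Ax. exact (HC x Cx Ax).
    - constructor.
      + exists (fun _ => True). split; [exact GT|]. intros; exact I.
      + intros S1 S2 [C1 [G1 H1]] [C2 [G2 H2]]. exists (fun x => C1 x /\ C2 x). split.
        apply GI; assumption. intros x [c1 c2] a. split; [apply H1|apply H2]; assumption.
      + intros P Q PQ [C [GC HC]]. exists C; split; [exact GC|]. intros x c a; apply PQ; apply HC; assumption. }
  assert (sub : forall S, G S -> G' S).
  { intros S GS'. exists S; split; [exact GS'|]. intros; assumption. }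
  pose proof (Gmax G' PG' sub) as E.
  assert (G' A) by (exists (fun _ => True); split; [exact GT|]; intros; assumption).
  rewrite E in H0. exact H0.
Qed.

Lemma ult_filter {X} (U : setsys X) : is_ultra U -> is_filter U.
Proof. intros [[H _] _]; exact H. Qed.

Lemma fmono {X} (U : setsys X) A B : is_filter U -> (forall x, A x -> B x) -> U A -> U B.
Proof. intros [_ [_ H]] h; apply H; exact h. Qed.

Lemma fand {X} (U : setsys X) A B : is_filter U -> U A -> U B -> U (fun x => A x /\ B x).
Proof. intros [_ [H _]]; apply H. Qed.

Lemma ftrue {X} (U : setsys X) : is_filter U -> U (fun _ => True).
Proof. intros [H _]; exact H. Qed.

Lemma ult_ne {X} (U : setsys X) A : is_ultra U -> U A -> exists x, A x.
Proof.
  intros HU HA. apply NNPP; intro N. apply (proj2 (proj1 HU)).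
  apply (fmono U A); [apply ult_filter; auto| |auto]. intros x Ax; apply N; exists x; auto.
Qed.

Lemma ult_not {X} (U : setsys X) A : is_ultra U -> U A -> U (fun x => ~ A x) -> False.
Proof.
  intros HU H1 H2. destruct (ult_ne U (fun x => A x /\ ~ A x) HU) as [x [a b]].
  apply fand; auto; apply ult_filter; auto. auto.
Qed.

Lemma ult_const {X} (U : setsys X) (P : Prop) : is_ultra U -> U (fun _ => P) <-> P.
Proof.
  intros HU; split.
  - intro H. destruct (ult_ne U _ HU H) as [_ p]; exact p.
  - intro p. apply (fmono U (fun _ => True)); auto. apply ult_filter; auto. apply ftrue, ult_filter; auto.
Qed.

Lemma ultra_principal {X} (x : X) : is_ultra (principal x).
Proof.
  unfold principal. split; [split; [split; [exact I| split]|]|].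
  - intros A B a b; split; auto.
  - intros A B h a; auto.
  - intro f; exact f.
  - intro A; apply classic.
Qed.

Lemma filter_push {X Y} (f : X -> Y) U : is_filter U -> is_filter (push f U).
Proof.
  unfold push; intros [h1 [h2 h3]]; split; [exact h1|split].
  - intros A B; apply h2.
  - intros A B h; apply h3; intros x; apply h.
Qed.

Lemma ultra_push {X Y} (f : X -> Y) U : is_ultra U -> is_ultra (push f U).
Proof.
  intros [[hf hn] hu]; split; [split|].
  - apply filter_push; auto.
  - exact hn.
  - intro A; apply (hu (fun x => A (f x))).
Qed.

Lemma setsys_ext {X} (U V : setsys X) : (forall A, U A <-> V A) -> U = V.
Proof. intros h; apply functional_extensionality; intro A; apply propositional_extensionality; auto. Qed.

Lemma ultra_sub_eq {X} (U V : setsys X) : is_ultra U -> is_ultra V -> finer U V -> V = U.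
Proof.
  intros HU HV h. apply setsys_ext; intro A; split; [|apply h].
  intro VA. destruct (proj2 HU A) as [u|u]; auto.
  exfalso; apply (ult_not V A HV VA (h _ u)).
Qed.

Lemma ultra_fconv (X : PsSpace) U x : is_ultra U -> conv X U x -> fconv X U x.
Proof.
  intros HU Hc U' HU' hf. rewrite (ultra_sub_eq U U' HU HU' hf). exact Hc.
Qed.

Lemma fconv_mono (X : PsSpace) F G x : finer F G -> fconv X F x -> fconv X G x.
Proof. intros h Hc U HU hf; apply Hc; auto. intros A a; apply hf, h, a. Qed.

Lemma fconv_ultra (X : PsSpace) U x : is_ultra U -> fconv X U x -> conv X U x.
Proof. intros HU h; apply h; auto. intros A a; exact a. Qed.

Lemma push_principal {X Y} (f : X -> Y) x : push f (principal x) = principal (f x).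
Proof. reflexivity. Qed.

Lemma push_const {X Y} (U : setsys X) (y : Y) : is_ultra U -> push (fun _ => y) U = principal y.
Proof. intros HU; apply setsys_ext; intro A; unfold push, principal; apply ult_const; auto. Qed.

Lemma ult_idx {X I : Type} (b : I -> X -> Prop) :
  inhabited I -> (forall i1 i2, exists i3, forall x, b i3 x -> b i1 x /\ b i2 x) ->
  (forall i, exists x, b i x) -> exists U, is_ultra U /\ forall i, U (b i).
Proof.
  intros [i0] hI hne.
  set (F := fun S : X -> Prop => exists i, forall x, b i x -> S x).
  assert (hF : is_filter F).
  { split; [exists i0; auto|split].
    - intros A B [i1 h1] [i2 h2]. destruct (hI i1 i2) as [i3 h3]. exists i3.
      intros x bx; destruct (h3 x bx); split; auto.
    - intros A B h [i hi]; exists i; auto. }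
  destruct (ult X F hF) as [U [HU hU]].
  - intros [i hi]. destruct (hne i) as [x bx]. exact (hi x bx).
  - exists U; split; auto. intros i; apply hU. exists i; auto.
Qed.

Lemma filter_prodF {X Y} (F : setsys X) (G : setsys Y) : is_filter F -> is_filter G -> is_filter (prodF F G).
Proof.
  intros hF hG; split; [|split].
  - exists (fun _ => True), (fun _ => True); repeat split; try apply ftrue; auto.
  - intros A B [A1 [B1 [h1 [h2 h3]]]] [A2 [B2 [h4 [h5 h6]]]].
    exists (fun x => A1 x /\ A2 x), (fun y => B1 y /\ B2 y); split; [apply fand; auto|split; [apply fand; auto|]].
    intros a b [] []; split; auto.
  - intros A B h [A1 [B1 [h1 [h2 h3]]]]. exists A1, B1; repeat split; auto.
Qed.

Lemma lift_push {A B} (f : A -> B) (H : setsys A) (RB : setsys B) :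
  is_filter H -> is_ultra RB -> finer (push f H) RB ->
  exists R, is_ultra R /\ finer H R /\ push f R = RB.
Proof.
  intros hH hR hf.
  destruct (ult_idx (I := {S : A -> Prop | H S} * {T : B -> Prop | RB T})
     (fun i x => proj1_sig (fst i) x /\ proj1_sig (snd i) (f x))) as [R [HR hRb]].
  - constructor. exact (exist _ _ (ftrue H hH), exist _ _ (ftrue RB (ult_filter _ hR))).
  - intros [[S1 h1] [T1 k1]] [[S2 h2] [T2 k2]].
    exists (exist _ _ (fand H S1 S2 hH h1 h2), exist _ _ (fand RB T1 T2 (ult_filter _ hR) k1 k2)).
    simpl; intros x [[] []]; tauto.
  - intros [[S h] [T k]]; simpl. apply NNPP; intro N.
    assert (push f H (fun y => ~ T y)).
    { unfold push; apply (fmono H S); auto. intros x Sx Tx; apply N; exists x; auto. }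
    apply (ult_not RB T hR k (hf _ H0)).
  - exists R; split; auto; split.
    + intros S hS. apply (fmono R _ _ (ult_filter _ HR)) with (2 := hRb (exist _ S hS, exist _ _ (ftrue RB (ult_filter _ hR)))).
      simpl; tauto.
    + apply (ultra_sub_eq RB (push f R)); auto. apply ultra_push; auto.
      intros T k. unfold push. apply (fmono R _ _ (ult_filter _ HR)) with (2 := hRb (exist _ _ (ftrue H hH), exist _ T k)).
      simpl; tauto.
Qed.

Lemma top_fconv_open (Z : TopSpace) (F : setsys Z) z :
  is_filter F -> fconv (topPs Z) F z -> forall O, is_open Z O -> O z -> F O.
Proof.
  intros hF hc O hO Oz. apply NNPP; intro N.
  destruct (ult_idx (I := {S : Z -> Prop | F S}) (fun i x => proj1_sig i x /\ ~ O x)) as [U [HU hU]].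
  - constructor; exact (exist _ _ (ftrue F hF)).
  - intros [S1 h1] [S2 h2]; exists (exist _ _ (fand F S1 S2 hF h1 h2)); simpl; tauto.
  - intros [S h]; simpl. apply NNPP; intro M. apply N. apply (fmono F S); auto.
    intros x Sx; apply NNPP; intro Ox; apply M; exists x; auto.
  - assert (fU : finer F U). { intros S h. apply (fmono U _ _ (ult_filter _ HU)) with (2 := hU (exist _ S h)); simpl; tauto. }
    destruct (hc U HU fU) as [_ hc2]. apply (ult_not U O HU (hc2 O hO Oz)).
    apply (fmono U _ _ (ult_filter _ HU)) with (2 := hU (exist _ _ (ftrue F hF))); simpl; tauto.
Qed.

Lemma open_fconv (Z : TopSpace) (F : setsys Z) z :
  (forall O, is_open Z O -> O z -> F O) -> fconv (topPs Z) F z.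
Proof. intros h U HU hf; split; auto. Qed.

Lemma lemmaL {A B} (Z : TopSpace) (e : A * B -> Z) (U : setsys A) (G : setsys B) z :
  is_filter U -> is_filter G ->
  (forall R, is_ultra R -> finer G R -> fconv (topPs Z) (push e (prodF U R)) z) ->
  fconv (topPs Z) (push e (prodF U G)) z.
Proof.
  intros hU hG h. apply open_fconv. intros O hO Oz. apply NNPP; intro N.
  destruct (ult_idx (I := {S : A -> Prop | U S} * {T : B -> Prop | G T})
     (fun i b => proj1_sig (snd i) b /\ exists a, proj1_sig (fst i) a /\ ~ O (e (a, b)))) as [R [HR hR]].
  - constructor. exact (exist _ _ (ftrue U hU), exist _ _ (ftrue G hG)).
  - intros [[S1 h1] [T1 k1]] [[S2 h2] [T2 k2]].
    exists (exist _ _ (fand U S1 S2 hU h1 h2), exist _ _ (fand G T1 T2 hG k1 k2)).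
    simpl; intros x [[] [a [[] Oa]]]; split; split; auto; exists a; auto.
  - intros [[S hS] [T hT]]; simpl. apply NNPP; intro M. apply N.
    exists S, T; split; auto; split; auto. intros a b Sa Tb. apply NNPP; intro Ob. apply M.
    exists b; split; auto; exists a; auto.
  - assert (fG : finer G R).
    { intros T k. apply (fmono R _ _ (ult_filter _ HR)) with (2 := hR (exist _ _ (ftrue U hU), exist _ T k)); simpl; tauto. }
    pose proof (top_fconv_open Z _ z (filter_push e _ (filter_prodF _ _ hU (ult_filter _ HR))) (h R HR fG) O hO Oz) as P.
    destruct P as [S [T [hS [hT hST]]]].
    destruct (ult_ne R _ HR (fand R _ _ (ult_filter _ HR) hT (hR (exist _ S hS, exist _ _ (ftrue G hG)))))
      as [b [Tb [_ [a [Sa Ob]]]]].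
    apply Ob, hST; auto.
Qed.

Lemma sig_eq {A} {P : A -> Prop} (a b : sig P) : proj1_sig a = proj1_sig b -> a = b.
Proof. destruct a as [a pa], b as [b pb]; simpl; intro e; subst; f_equal; apply proof_irrelevance. Qed.

Definition upd {J} {T : J -> Type} (p : forall j, T j) (j : J) (a : T j) : forall k, T k :=
  fun k => match excluded_middle_informative (j = k) with
           | left e => eq_rect j T a k e | right _ => p k end.

Lemma upd_same {J} {T : J -> Type} (p : forall j, T j) j a : upd p j a j = a.
Proof.
  unfold upd; destruct (excluded_middle_informative (j = j)) as [e|n]; [|contradiction].
  rewrite (proof_irrelevance _ e eq_refl); reflexivity.
Qed.

Lemma upd_other {J} {T : J -> Type} (p : forall j, T j) j a k : j <> k -> upd p j a k = p k.
Proof. unfold upd; destruct (excluded_middle_informative (j = k)); [contradiction|auto]. Qed.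

Lemma upd_id {J} {T : J -> Type} (p : forall j, T j) j : upd p j (p j) = p.
Proof.
  apply functional_extensionality_dep; intro k; unfold upd.
  destruct (excluded_middle_informative (j = k)) as [e|n]; [destruct e; reflexivity|auto].
Qed.

Lemma cont_const (Y : PsSpace) (y : Y) : PsAxioms Y -> continuous (topPs unitI) Y (fun _ => y).
Proof.
  intros [_ HP] U t [HU _]. rewrite (push_const U y HU). apply HP.
Qed.

Lemma pathrel_refl (Y : PsSpace) (y : Y) : PsAxioms Y -> pathrel Y y y.
Proof. intros h; exists (fun _ => y); split; auto; apply cont_const; auto. Qed.

Lemma pathrel_prod {J} (X : J -> PsSpace) (x z : prodPs X) :
  pathrel (prodPs X) x z <-> forall j, pathrel (X j) (x j) (z j).
Proof.
  split.
  - intros [p [hp [h0 h1]]] j. exists (fun t => p t j); split; [|split; subst; auto].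
    intros U t hc. exact (proj2 (hp U t hc) j).
  - intros h.
    set (q := fun j => proj1_sig (constructive_indefinite_description _ (h j))).
    assert (hq : forall j, continuous (topPs unitI) (X j) (q j) /\ q j i0 = x j /\ q j i1 = z j).
    { intro j; exact (proj2_sig (constructive_indefinite_description _ (h j))). }
    exists (fun t j => q j t); split; [|split].
    + intros U t hc. split. apply ultra_push; exact (proj1 hc).
      intro j. apply (proj1 (hq j)); auto.
    + apply functional_extensionality_dep; intro j; apply hq.
    + apply functional_extensionality_dep; intro j; apply hq.
Qed.

Lemma pi0proj_eq (Y : PsSpace) (x y : Y) : pcomp Y x = pcomp Y y -> pi0proj Y x = pi0proj Y y.
Proof. intro e; apply sig_eq; exact e. Qed.

Lemma pi0proj_eq' (Y : PsSpace) (x y : Y) : pi0proj Y x = pi0proj Y y -> pcomp Y x = pcomp Y y.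
Proof. intro e; exact (f_equal (@proj1_sig _ _) e). Qed.

Lemma comp_to_prod {J} (X : J -> PsSpace) (x y : prodPs X) :
  (forall j, pi0proj (X j) (x j) = pi0proj (X j) (y j)) -> pi0proj (prodPs X) x = pi0proj (prodPs X) y.
Proof.
  intro h. apply pi0proj_eq. apply functional_extensionality; intro z; apply propositional_extensionality.
  unfold pcomp. rewrite !pathrel_prod. split; intros H j; specialize (H j);
  pose proof (pi0proj_eq' _ _ _ (h j)) as E; unfold pcomp in E.
  - pose proof (f_equal (fun f => f (z j)) E) as E2; simpl in E2; rewrite <- E2; auto.
  - pose proof (f_equal (fun f => f (z j)) E) as E2; simpl in E2; rewrite E2; auto.
Qed.

Lemma prod_to_comp {J} (X : J -> PsSpace) (x y : prodPs X) :
  (forall j, PsAxioms (X j)) ->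
  pi0proj (prodPs X) x = pi0proj (prodPs X) y -> forall j, pi0proj (X j) (x j) = pi0proj (X j) (y j).
Proof.
  intros hX h j. pose proof (pi0proj_eq' _ _ _ h) as E. unfold pcomp in E.
  assert (key : forall (x y : prodPs X), (fun z => pathrel (prodPs X) x z) = (fun z => pathrel (prodPs X) y z) ->
            forall a, pathrel (X j) (x j) a -> pathrel (X j) (y j) a).
  { clear x y h E. intros x y E a ha.
    assert (H : pathrel (prodPs X) x (upd (T := fun j => X j) x j a)).
    { apply pathrel_prod. intro k. destruct (classic (j = k)) as [e|n].
      - subst k. rewrite upd_same; auto.
      - rewrite upd_other; auto. apply pathrel_refl; auto. }
    pose proof (f_equal (fun f => f (upd (T := fun j => X j) x j a)) E) as E2. simpl in E2.
    rewrite E2 in H. apply pathrel_prod with (j := j) in H. rewrite upd_same in H. exact H. }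
  apply pi0proj_eq. apply functional_extensionality; intro a; apply propositional_extensionality.
  split; apply key; auto.
Qed.

Definition rep (Y : PsSpace) (c : pi0car Y) : Y := proj1_sig (constructive_indefinite_description _ (proj2_sig c)).

Lemma rep_spec (Y : PsSpace) (c : pi0car Y) : pi0proj Y (rep Y c) = c.
Proof.
  apply sig_eq. simpl. unfold rep. symmetry.
  exact (proj2_sig (constructive_indefinite_description _ (proj2_sig c))).
Qed.

Definition Qm {J} (X : J -> PsSpace) (x : prodPs X) : forall j, pi0car (X j) := fun j => pi0proj (X j) (x j).
Definition phim {J} (X : J -> PsSpace) (c : pi0car (prodPs X)) : forall j, pi0car (X j) := Qm X (rep _ c).
Definition gm {J} (X : J -> PsSpace) (y : forall j, pi0car (X j)) : pi0car (prodPs X) :=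
  pi0proj (prodPs X) (fun j => rep (X j) (y j)).

Lemma phim_eq {J} (X : J -> PsSpace) x : (forall j, PsAxioms (X j)) -> phim X (pi0proj (prodPs X) x) = Qm X x.
Proof.
  intros hX. apply functional_extensionality_dep; intro j. unfold phim, Qm.
  apply prod_to_comp; auto. apply rep_spec.
Qed.

Lemma gm_Q {J} (X : J -> PsSpace) x : gm X (Qm X x) = pi0proj (prodPs X) x.
Proof. unfold gm, Qm. apply comp_to_prod. intro j. apply rep_spec. Qed.

Lemma phim_gm {J} (X : J -> PsSpace) y : (forall j, PsAxioms (X j)) -> phim X (gm X y) = y.
Proof.
  intros hX. unfold gm. rewrite phim_eq; auto. apply functional_extensionality_dep; intro j.
  unfold Qm. apply rep_spec.
Qed.

Lemma gm_phim {J} (X : J -> PsSpace) c : (forall j, PsAxioms (X j)) -> gm X (phim X c) = c.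
Proof.
  intros hX. rewrite <- (rep_spec _ c). rewrite phim_eq; auto. apply gm_Q.
Qed.

Lemma lift_prod {J} (X : J -> PsSpace) (U : setsys (forall j, pi0car (X j))) (y : forall j, pi0car (X j)) :
  (forall j, PsAxioms (X j)) -> is_ultra U ->
  (forall j, conv (pi0ps (X j)) (push (fun y => y j) U) (y j)) ->
  exists V x, conv (prodPs X) V x /\ Qm X x = y /\ push (Qm X) V = U.
Proof.
  intros hX HU hc.
  assert (hj : forall j, exists (p : setsys (X j) * X j), conv (X j) (fst p) (snd p) /\
              pi0proj (X j) (snd p) = y j /\ push (fun y => y j) U = push (pi0proj (X j)) (fst p)).
  { intro j. pose proof (hc j) as H0. simpl in H0. destruct H0 as [E | [V [x [h1 [h2 h3]]]]].
    - exists (principal (rep _ (y j)), rep _ (y j)); simpl. split; [apply (proj2 (hX j))|].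
      rewrite rep_spec. split; [reflexivity|]. rewrite E, push_principal, rep_spec. reflexivity.
    - exists (V, x); simpl; split; auto. }
  set (Vf := fun j => fst (proj1_sig (constructive_indefinite_description _ (hj j)))).
  set (xf := fun j => snd (proj1_sig (constructive_indefinite_description _ (hj j)))).
  assert (hf : forall j, conv (X j) (Vf j) (xf j) /\ pi0proj (X j) (xf j) = y j /\
                push (fun y => y j) U = push (pi0proj (X j)) (Vf j)).
  { intro j; exact (proj2_sig (constructive_indefinite_description _ (hj j))). }
  assert (VU : forall j, is_ultra (Vf j)). { intro j; exact (proj1 (hX j) _ _ (proj1 (hf j))). }
  set (good := fun (t : ((forall j, pi0car (X j)) -> Prop) * (forall j, X j -> Prop) * list J) =>
         U (fst (fst t)) /\ (forall j, Vf j (snd (fst t) j)) /\ (forall j, ~ In j (snd t) -> forall a, snd (fst t) j a)).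
  destruct (ult_idx (I := sig good)
     (fun i x => fst (fst (proj1_sig i)) (Qm X x) /\ forall j, snd (fst (proj1_sig i)) j (x j))) as [V [HV hV]].
  - constructor. exists ((fun _ => True), (fun _ _ => True), nil). split; [apply ftrue, ult_filter; auto|split].
    + intro j; apply ftrue, ult_filter; auto.
    + simpl; auto.
  - intros [[[A1 B1] l1] G1] [[[A2 B2] l2] G2]. unfold good in G1, G2; simpl in G1, G2.
    destruct G1 as [g1 [g2 g3]]; destruct G2 as [k1 [k2 k3]]; simpl.
    assert (gd : good ((fun c => A1 c /\ A2 c), (fun j a => B1 j a /\ B2 j a), l1 ++ l2)).
    { split; [apply fand; auto; apply ult_filter; auto|split]; simpl.
      - intro j; apply fand; auto; apply ult_filter; auto.
      - intros j nj a. rewrite in_app_iff in nj. split; [apply g3|apply k3]; tauto. }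
    exists (exist _ _ gd); simpl. intros x [[a1 a2] hb]; split; split; auto; intro j; apply hb.
  - intros [[[A Bf] l] G1]. unfold good in G1; simpl in G1. destruct G1 as [g1 [g2 g3]]; simpl.
    set (S := fun c : forall j, pi0car (X j) => A c /\ forall j, In j l -> exists b, Bf j b /\ pi0proj (X j) b = c j).
    assert (US : U S).
    { unfold S. clear g3. induction l as [|j l IH].
      - apply (fmono U A); auto. apply ult_filter; auto. intros c a; split; auto. intros j [].
      - assert (U (fun c => exists b, Bf j b /\ pi0proj (X j) b = c j)).
        { pose proof (f_equal (fun F => F (fun c' => exists b, Bf j b /\ pi0proj (X j) b = c')) (proj2 (proj2 (hf j)))) as E.
          simpl in E. unfold push in E. rewrite E. apply (fmono _ (Bf j)); auto. apply ult_filter; auto.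
          intros a ba; exists a; auto. }
        apply (fmono U _ _ (ult_filter _ HU)) with (2 := fand U _ _ (ult_filter _ HU) IH H).
        intros c [[a h1] h2]; split; auto. intros k [e|ik]; [subst k; auto|auto]. }
    destruct (ult_ne U S HU US) as [c [Ac hc2]].
    assert (hb : forall j, exists b, Bf j b /\ pi0proj (X j) b = c j).
    { intro j. destruct (classic (In j l)) as [i|n]; auto. exists (rep _ (c j)); split; [apply g3; auto|apply rep_spec]. }
    exists (fun j => proj1_sig (constructive_indefinite_description _ (hb j))). split.
    + replace (Qm X _) with c; auto. apply functional_extensionality_dep; intro j. unfold Qm.
      symmetry; apply (proj2_sig (constructive_indefinite_description _ (hb j))).
    + intro j; apply (proj2_sig (constructive_indefinite_description _ (hb j))).
  - assert (Vj : forall j, push (fun x => x j) V = Vf j).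
    { intro j. apply (ultra_sub_eq (Vf j) (push (fun x => x j) V)); auto. apply ultra_push; auto.
      intros B hB.
      set (Bf := fun k (a : X k) => forall e : k = j, B (eq_rect k (fun k => X k) a j e)).
      assert (gd : good ((fun _ => True), Bf, j :: nil)).
      { split; [apply ftrue, ult_filter; auto|split]; simpl.
        - intro k. destruct (classic (k = j)) as [e|n].
          + subst k. apply (fmono _ B); auto. apply ult_filter; auto.
            intros a Ba e. rewrite (proof_irrelevance _ e eq_refl); exact Ba.
          + apply (fmono _ (fun _ => True)); [apply ult_filter; auto| |apply ftrue, ult_filter; auto].
            intros a _ e; contradiction.
        - intros k nk a e. exfalso; apply nk; left; auto. }
      apply (fmono V _ _ (ult_filter _ HV)) with (2 := hV (exist _ _ gd)); simpl.
      intros x [_ h]. exact (h j eq_refl). }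
    exists V, xf. split; [split; auto|split].
    + intro j. rewrite Vj. apply hf.
    + apply functional_extensionality_dep; intro j; apply hf.
    + apply (ultra_sub_eq U (push (Qm X) V)); auto. apply ultra_push; auto.
      intros A hA.
      assert (gd : good (A, (fun _ _ => True), nil)).
      { split; auto; split; simpl. intro j; apply ftrue; apply ult_filter; auto. auto. }
      apply (fmono V _ _ (ult_filter _ HV)) with (2 := hV (exist _ _ gd)); simpl. tauto.
Qed.

Lemma part1 : forall (J : Type) (X : J -> PsSpace),
     (forall j, PsAxioms (X j)) ->
     exists phi : pi0ps (prodPs X) -> prodPs (fun j => pi0ps (X j)),
       (forall x : prodPs X,
          phi (pi0proj (prodPs X) x) = (fun j => pi0proj (X j) (x j))) /\
       ps_iso (pi0ps (prodPs X)) (prodPs (fun j => pi0ps (X j))) phi.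
Proof.
  intros J X hX. exists (phim X). split; [intro x; apply phim_eq; auto|].
  exists (gm X). split; [intro; apply gm_phim; auto|split; [intro; apply phim_gm; auto|split]].
  - intros U c [E | [V [x [hc [e1 e2]]]]].
    + subst U. split; [apply ultra_principal|]. intro j. left. reflexivity.
    + subst U c. rewrite phim_eq; auto. split.
      { apply ultra_push, ultra_push. exact (proj1 hc). }
      intro j. right. exists (push (fun y => y j) V), (x j). split; [apply hc|split; auto].
      unfold push. f_equal. apply functional_extensionality; intro S. f_equal.
      apply functional_extensionality; intro z. rewrite phim_eq; auto.
  - intros U y [HU hc]. destruct (lift_prod X U y hX HU hc) as [V [x [h1 [h2 h3]]]].
    right. exists V, x. split; auto. split.
    + subst y; apply gm_Q.
    + subst U. unfold push. f_equal. apply functional_extensionality; intro S. f_equal.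
      apply functional_extensionality; intro z. rewrite gm_Q; auto.
Qed.

Definition Tsp (W : PsSpace) (V : setsys W) (w : W) : TopSpace :=
  {| tpt := pt W; is_open := fun O => O w -> V O |}.

Lemma Tsp_top (W : PsSpace) V w : is_filter V -> TopAxioms (Tsp W V w).
Proof.
  intros hV; split; [|split]; simpl.
  - intros _; apply ftrue; auto.
  - intros A B hA hB [a b]. apply fand; auto.
  - intros I A hA [i Ai]. apply (fmono V (A i)); auto. intros x a; exists i; auto.
Qed.

Lemma Tsp_conv_cases (W : PsSpace) V w U x :
  is_filter V -> conv (topPs (Tsp W V w)) U x ->
  U (fun y => y = x) \/ (x = w /\ finer V U).
Proof.
  intros hV [HU hop]. destruct (classic (U (fun y => y = x))) as [h|h]; [left; auto|right].
  assert (xw : x = w).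
  { apply NNPP; intro n. apply h. apply hop; simpl; auto. intro e; exfalso; apply n; auto. }
  split; auto. intros B hB.
  assert (U (fun y => B y \/ y = w)).
  { apply hop; simpl. intros _; apply (fmono V B); auto. right; auto. }
  destruct (proj2 HU (fun y => y = x)) as [u|u]; [contradiction|].
  apply (fmono U _ _ (ult_filter _ HU)) with (2 := fand U _ _ (ult_filter _ HU) H u).
  intros y [[b|e] n]; auto. exfalso; apply n; congruence.
Qed.

Lemma Tsp_cont (W : PsSpace) (Z : TopSpace) V w (f : W -> Z) :
  PsAxioms W -> conv W V w -> continuous W (topPs Z) f -> continuous (topPs (Tsp W V w)) (topPs Z) f.
Proof.
  intros hW cv hf U x hc. split; [apply ultra_push; exact (proj1 hc)|].
  intros O hO Ox. assert (hV : is_filter V) by (apply ult_filter; exact (proj1 hW _ _ cv)).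
  destruct (Tsp_conv_cases W V w U x hV hc) as [h|[e h]].
  - apply (fmono U _ _ (ult_filter _ (proj1 hc))) with (2 := h). intros y ->; auto.
  - subst x. apply h. exact (proj2 (hf V w cv) O hO Ox).
Qed.

Lemma Tsp_convW (W : PsSpace) V w U x :
  PsAxioms W -> conv W V w -> conv (topPs (Tsp W V w)) U x -> conv W U x.
Proof.
  intros hW cv hc. assert (hV : is_ultra V) by exact (proj1 hW _ _ cv).
  destruct (Tsp_conv_cases W V w U x (ult_filter _ hV) hc) as [h|[e h]].
  - replace U with (principal x); [apply hW|].
    symmetry; apply (ultra_sub_eq (principal x) U); [apply ultra_principal|exact (proj1 hc)|].
    intros S Sx. apply (fmono U _ _ (ult_filter _ (proj1 hc))) with (2 := h). intros y ->; auto.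
  - subst x. replace U with V; auto. symmetry; apply (ultra_sub_eq V U); auto. exact (proj1 hc).
Qed.

Definition evf {A B : PsSpace} : {f : A -> B | continuous A B f} * A -> B :=
  fun p => proj1_sig (fst p) (snd p).

Lemma lemmaE (W : PsSpace) (Z : TopSpace) : PsAxioms W -> TopAxioms Z -> is_epitop (fspace W (topPs Z)).
Proof.
  intros hW hZ.
  set (I := {p : setsys W * W | conv W (fst p) (snd p)}).
  set (Yi := fun i : I => Tsp W (fst (proj1_sig i)) (snd (proj1_sig i))).
  set (hi := fun (i : I) (f : fspace W (topPs Z)) =>
     (exist _ (proj1_sig f) (Tsp_cont W Z _ _ (proj1_sig f) hW (proj2_sig i) (proj2_sig f))
        : fspace (topPs (Yi i)) (topPs Z))).
  exists I, Yi, (fun _ => Z), hi. split.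
  { intro i; split; auto. apply Tsp_top. apply ult_filter. exact (proj1 hW _ _ (proj2_sig i)). }
  intros U f. split.
  - intros [HU H]. split; auto. intro i. split; [apply ultra_push; auto|].
    intros G x hG hfc. simpl.
    assert (fW : fconv W G x).
    { intros U' HU' hf'. apply (Tsp_convW W _ _ _ _ hW (proj2_sig i)). apply hfc; auto. }
    apply (fconv_mono _ _ _ _ ) with (2 := H G x hG fW).
    intros S [A [B [hA [hB hAB]]]]. exists (fun a => exists f', A f' /\ hi i f' = a), B.
    split; [|split; auto].
    + unfold push. apply (fmono U A); auto. apply ult_filter; auto. intros f' a; exists f'; auto.
    + intros a b [f' [Af' <-]] Bb. exact (hAB f' b Af' Bb).
  - intros [HU H]. split; auto. intros G x hG hfc.
    apply lemmaL; [apply ult_filter; exact HU|exact hG|].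
    intros R HR hGR. pose proof (hfc R HR hGR) as cR.
    set (i := exist (fun p : setsys W * W => conv W (fst p) (snd p)) (R, x) cR : I).
    destruct (H i) as [_ Hi].
    assert (fT : fconv (topPs (Yi i)) R x).
    { apply ultra_fconv; auto. split; auto. }
    apply (fconv_mono _ _ _ _) with (2 := Hi R x (ult_filter _ HR) fT).
    intros S [A [B [hA [hB hAB]]]]. exists (fun f' => A (hi i f')), B. split; auto; split; auto.
    intros a b Aa Bb. exact (hAB _ b Aa Bb).
Qed.

Definition Phi {J} (X : J -> PsSpace) (Y Z : TopSpace)
  (F : (forall j, pi0car (X j)) -> fspace (topPs Y) (topPs Z)) (w : (forall j, pi0car (X j)) * Y) : Z :=
  proj1_sig (F (fst w)) (snd w).

Definition sconv {J} (X : J -> PsSpace) (S : J -> Prop) (U : setsys (forall j, pi0car (X j))) p :=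
  is_ultra U /\ forall i, (S i -> conv (pi0epi (X i)) (push (fun y => y i) U) (p i)) /\
                          (~ S i -> conv (pi0ps (X i)) (push (fun y => y i) U) (p i)).

Definition goodS {J} (X : J -> PsSpace) (Y Z : TopSpace) F (S : J -> Prop) :=
  forall R p t, is_ultra R -> sconv X S (push fst R) p -> conv (topPs Y) (push snd R) t ->
    conv (topPs Z) (push (Phi X Y Z F) R) (Phi X Y Z F (p, t)).

Lemma epi_principal (X : PsSpace) c : conv (pi0epi X) (principal c) c.
Proof. split; [apply ultra_principal|]. intros s hs _ _. apply (proj2 hs). Qed.

Lemma ps_to_epi (X : PsSpace) U c : PsAxioms X -> conv (pi0ps X) U c -> conv (pi0epi X) U c.
Proof.
  intros hX [E | [V [x [cv [e1 e2]]]]].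
  - subst; apply epi_principal.
  - subst. split; [apply ultra_push; exact (proj1 hX _ _ cv)|].
    intros s hs _ hc. exact (hc V x cv).
Qed.

Lemma good_ext {J} X Y Z F (S S' : J -> Prop) : (forall i, S i <-> S' i) -> goodS X Y Z F S -> goodS X Y Z F S'.
Proof.
  intros e h R p t HR [hu sc] hy. apply h; auto. split; auto. intro i; specialize (sc i); specialize (e i).
  split; intro; apply sc; tauto.
Qed.

Lemma fspace_principal (W : PsSpace) (Z : TopSpace) (f : fspace W (topPs Z)) :
  PsAxioms W -> conv (fspace W (topPs Z)) (principal f) f.
Proof.
  intros hW. split; [apply ultra_principal|]. intros G x hG hfc RZ HRZ hf.
  assert (fin : finer (push (proj1_sig f) G) RZ).
  { intros S hS. apply hf. exists (fun g => g = f), (fun b => S (proj1_sig f b)).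
    split; [reflexivity|split; auto]. intros a b -> Sb; exact Sb. }
  destruct (lift_push (proj1_sig f) G RZ hG HRZ fin) as [R [HR [hGR E]]].
  rewrite <- E. apply (proj2_sig f). apply hfc; auto.
Qed.

Lemma good_base {J} (X : J -> PsSpace) (Y Z : TopSpace) F :
  (forall j, PsAxioms (X j)) ->
  (forall V x, conv (prodPs X) V x ->
     conv (fspace (topPs Y) (topPs Z)) (push (fun x => F (Qm X x)) V) (F (Qm X x))) ->
  goodS X Y Z F (fun _ => False).
Proof.
  intros hX Fc R p t HR [hu sc] hy.
  assert (hc : forall i, conv (pi0ps (X i)) (push (fun y => y i) (push fst R)) (p i)).
  { intro i. apply (proj2 (sc i)). auto. }
  destruct (lift_prod X (push fst R) p hX hu hc) as [V [x [cv [eQ eV]]]].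
  set (H := fun S : prodPs X * Y -> Prop => V (fun x => forall t, S (x, t))).
  assert (hH : is_filter H).
  { assert (hV : is_filter V) by exact (ult_filter _ (proj1 cv)).
    split; [|split]; unfold H.
    - apply (fmono V (fun _ => True)); auto. apply ftrue; auto.
    - intros A B a b. apply (fmono V _ _ hV) with (2 := fand V _ _ hV a b). intros z [u v] s; split; auto.
    - intros A B hAB a. apply (fmono V _ _ hV) with (2 := a). intros z u s; auto. }
  set (q := fun w : prodPs X * Y => (Qm X (fst w), snd w)).
  assert (fin : finer (push q H) R).
  { intros S hS. unfold push, H, q in hS; simpl in hS.
    assert (push (Qm X) V (fun c => forall t, S (c, t))) by exact hS.
    rewrite eV in H0. unfold push in H0.
    apply (fmono R _ _ (ult_filter _ HR)) with (2 := H0). intros [c s] h; simpl in h; auto. }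
  destruct (lift_push q H R hH HR fin) as [Rt [HRt [hHR ER]]].
  assert (fV : push fst Rt = V).
  { apply (ultra_sub_eq V (push fst Rt)); [exact (proj1 cv)|apply ultra_push; auto|].
    intros A hA. apply hHR. unfold H. apply (fmono V A); auto. apply ult_filter; exact (proj1 cv). }
  subst R. destruct (Fc V x cv) as [_ Fc2].
  assert (ft : fconv (topPs Y) (push snd Rt) t).
  { apply ultra_fconv; auto. apply ultra_push; auto. }
  pose proof (Fc2 (push snd Rt) t (filter_push _ _ (ult_filter _ HRt)) ft) as C.
  subst p. apply fconv_ultra. apply ultra_push, ultra_push; auto.
  apply (fconv_mono _ _ _ _) with (2 := C).
  intros S [A [B [hA [hB hAB]]]]. unfold push. unfold push in hA, hB.
  rewrite <- fV in hA. unfold push in hA.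
  apply (fmono Rt _ _ (ult_filter _ HRt)) with (2 := fand Rt _ _ (ult_filter _ HRt) hA hB).
  intros [z s] [a b]; simpl in *. exact (hAB _ _ a b).
Qed.

Definition Wsp {J} (X : J -> PsSpace) (Y : TopSpace) (S : J -> Prop) (j : J) : PsSpace :=
  {| pt := (forall i, pi0car (X i)) * Y;
     conv := fun R w => is_ultra R /\
        (forall i, i <> j ->
           (S i -> conv (pi0epi (X i)) (push (fun y => y i) (push fst R)) (fst w i)) /\
           (~ S i -> conv (pi0ps (X i)) (push (fun y => y i) (push fst R)) (fst w i))) /\
        conv (topPs Y) (push snd R) (snd w) |}.

Lemma Wsp_ax {J} X Y S (j : J) : PsAxioms (Wsp X Y S j).
Proof.
  split; [intros U x [h _]; exact h|]. intros [p t]. split; [apply ultra_principal|split].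
  - intros i _. split; intros _; [apply epi_principal|left; reflexivity].
  - split; [apply ultra_principal|]. intros O _ Ot; exact Ot.
Qed.

Definition Psif {J} (X : J -> PsSpace) (Y Z : TopSpace) F S (j : J) (c : pi0car (X j)) (w : Wsp X Y S j) : tpt Z :=
  Phi X Y Z F (upd (T := fun i => pi0car (X i)) (fst w) j c, snd w).

Lemma push_upd_same {J} (X : J -> PsSpace) {A} (R : setsys A) (g : A -> forall i, pi0car (X i)) j (h : A -> pi0car (X j)) :
  push (fun a => upd (T := fun i => pi0car (X i)) (g a) j (h a) j) R = push h R.
Proof.
  unfold push. f_equal. apply functional_extensionality; intro S. f_equal.
  apply functional_extensionality; intro a. rewrite upd_same; auto.
Qed.

Lemma push_upd_other {J} (X : J -> PsSpace) {A} (R : setsys A) (g : A -> forall i, pi0car (X i)) j (h : A -> pi0car (X j)) i :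
  j <> i -> push (fun a => upd (T := fun i => pi0car (X i)) (g a) j (h a) i) R = push (fun a => g a i) R.
Proof.
  intro n. unfold push. apply functional_extensionality; intro S. f_equal.
  apply functional_extensionality; intro a. rewrite upd_other; auto.
Qed.

Lemma conv_rw (X : PsSpace) U U' x x' : U' = U -> x' = x -> conv X U x -> conv X U' x'.
Proof. intros -> ->; auto. Qed.

Lemma Psi_cont {J} (X : J -> PsSpace) Y Z F S (j : J) c :
  goodS X Y Z F S -> continuous (Wsp X Y S j) (topPs Z) (Psif X Y Z F S j c).
Proof.
  intros hg R w [HR [Hi Hy]].
  set (m := fun w : Wsp X Y S j => (upd (T := fun i => pi0car (X i)) (fst w) j c, snd w)).
  apply (hg (push m R) (upd (T := fun i => pi0car (X i)) (fst w) j c) (snd w)); [apply ultra_push; auto| |exact Hy].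
  split; [apply ultra_push, ultra_push; auto|]. intro i.
  destruct (classic (j = i)) as [e|n].
  - subst i. assert (E : push (fun y => y j) (push fst (push m R)) = principal c).
    { apply setsys_ext; intro A. unfold push, principal, m; simpl.
      assert (Ef : (fun x : (forall i, pi0car (X i)) * tpt Y => A (upd (T := fun i => pi0car (X i)) (fst x) j c j)) = (fun _ => A c)).
      { apply functional_extensionality; intro x; rewrite upd_same; auto. }
      rewrite Ef. apply ult_const; auto. }
    split; intros _.
    + apply (conv_rw (pi0epi (X j)) (principal c) _ c); [exact E|apply (upd_same (T := fun i => pi0car (X i)))|apply epi_principal].
    + apply (conv_rw (pi0ps (X j)) (principal c) _ c); [exact E|apply (upd_same (T := fun i => pi0car (X i)))|left; reflexivity].
  - assert (E : push (fun y => y i) (push fst (push m R)) = push (fun y => y i) (push fst R)).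
    { apply setsys_ext; intro A. unfold push, m; simpl.
      assert (Ef : (fun x : (forall i, pi0car (X i)) * tpt Y => A (upd (T := fun i => pi0car (X i)) (fst x) j c i)) = (fun x => A (fst x i))).
      { apply functional_extensionality; intro x; rewrite upd_other; auto. }
      rewrite Ef. tauto. }
    destruct (Hi i (fun e => n (eq_sym e))) as [h1 h2].
    split; intro h.
    + apply (conv_rw (pi0epi (X i)) (push (fun y : forall x : J, pi0car (X x) => y i) (push fst R)) _ (fst w i)); [exact E|apply (upd_other (T := fun i => pi0car (X i))); exact n|auto].
    + apply (conv_rw (pi0ps (X i)) (push (fun y : forall x : J, pi0car (X x) => y i) (push fst R)) _ (fst w i)); [exact E|apply (upd_other (T := fun i => pi0car (X i))); exact n|auto].
Qed.

Definition Psi {J} (X : J -> PsSpace) (Y Z : TopSpace) F S (j : J) (hg : goodS X Y Z F S) (c : pi0car (X j))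
  : fspace (Wsp X Y S j) (topPs Z) := exist _ (Psif X Y Z F S j c) (Psi_cont X Y Z F S j c hg).

Definition Sj {J} (X : J -> PsSpace) (Y Z : TopSpace) F S (j : J) (hg : goodS X Y Z F S) : PsSpace :=
  {| pt := pi0car (X j);
     conv := fun V c => is_ultra V /\
        conv (fspace (Wsp X Y S j) (topPs Z)) (push (Psi X Y Z F S j hg) V) (Psi X Y Z F S j hg c) |}.

Lemma Sj_ax {J} X Y Z F S (j : J) hg : PsAxioms (Sj X Y Z F S j hg).
Proof.
  split; [intros U x [h _]; exact h|]. intro c. split; [apply ultra_principal|].
  apply fspace_principal. apply Wsp_ax.
Qed.

Lemma Sj_epi {J} X Y Z F S (j : J) hg : TopAxioms Z -> is_epitop (Sj X Y Z F S j hg).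
Proof.
  intros hZ. destruct (lemmaE (Wsp X Y S j) Z (Wsp_ax X Y S j) hZ) as [I [Yi [Zi [h [hT hiff]]]]].
  exists I, Yi, Zi, (fun i c => h i (Psi X Y Z F S j hg c)). split; auto.
  intros V c. split.
  - intros [HV Hc]. apply hiff in Hc. destruct Hc as [_ H]; split; auto.
  - intros [HV H]; split; auto. apply hiff; split; auto. apply ultra_push; auto.
Qed.

Lemma Sj_cont {J} X Y Z F S (j : J) hg : (forall i, PsAxioms (X i)) ->
  continuous (X j) (Sj X Y Z F S j hg) (pi0proj (X j)).
Proof.
  intros hX V x cv. assert (HV : is_ultra V) by exact (proj1 (hX j) _ _ cv).
  split; [apply ultra_push; auto|]. split; [apply ultra_push, ultra_push; auto|].
  intros G w hG hfc. apply lemmaL; [apply filter_push, filter_push, ult_filter; auto|exact hG|].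
  intros R HR hGR. pose proof (hfc R HR hGR) as [_ [Hi Hy]].
  intros RZ HRZ fin.
  set (e3 := fun q : X j * Wsp X Y S j => Psif X Y Z F S j (pi0proj (X j) (fst q)) (snd q)).
  assert (fin3 : finer (push e3 (prodF V R)) RZ).
  { intros T [A [B [hA [hB hAB]]]]. apply fin.
    exists (fun a => exists x', A x' /\ Psi X Y Z F S j hg (pi0proj (X j) x') = a), B.
    split; [|split; auto].
    - unfold push. apply (fmono V A); [apply ult_filter; auto| |auto]. intros x' a; exists x'; auto.
    - intros a b [x' [Ax <-]] Bb. exact (hAB x' b Ax Bb). }
  destruct (lift_push e3 (prodF V R) RZ (filter_prodF _ _ (ult_filter _ HV) (ult_filter _ HR)) HRZ fin3)
    as [R3 [HR3 [hVR E3]]].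
  assert (f3 : push fst R3 = V).
  { apply (ultra_sub_eq V (push fst R3)); auto. apply ultra_push; auto.
    intros A hA; apply hVR. exists A, (fun _ => True). split; auto; split; [apply ftrue, ult_filter; auto|]. auto. }
  assert (s3 : push snd R3 = R).
  { apply (ultra_sub_eq R (push snd R3)); auto. apply ultra_push; auto.
    intros A hA; apply hVR. exists (fun _ => True), A. split; [apply ftrue, ult_filter; auto|split; auto]. }
  rewrite <- E3.
  set (m := fun q : X j * Wsp X Y S j =>
              (upd (T := fun i => pi0car (X i)) (fst (snd q)) j (pi0proj (X j) (fst q)), snd (snd q))).
  apply (hg (push m R3) (upd (T := fun i => pi0car (X i)) (fst w) j (pi0proj (X j) x)) (snd w));
    [apply ultra_push; auto| |].
  - split; [apply ultra_push, ultra_push; auto|]. intro i.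
    destruct (classic (j = i)) as [e|n].
    + subst i.
      assert (E : push (fun y => y j) (push fst (push m R3)) = push (pi0proj (X j)) V).
      { rewrite <- f3. apply setsys_ext; intro A. unfold push, m; simpl.
        assert (Ef : (fun x : X j * ((forall i, pi0car (X i)) * tpt Y) =>
                        A (upd (T := fun i => pi0car (X i)) (fst (snd x)) j (pi0proj (X j) (fst x)) j))
                     = (fun x => A (pi0proj (X j) (fst x)))).
        { apply functional_extensionality; intro q; rewrite upd_same; auto. }
        rewrite Ef. tauto. }
      assert (cps : conv (pi0ps (X j)) (push (pi0proj (X j)) V) (pi0proj (X j) x)).
      { right. exists V, x. auto. }
      split; intros _.
      * apply (conv_rw (pi0epi (X j)) (push (pi0proj (X j)) V) _ (pi0proj (X j) x));
          [exact E|apply (upd_same (T := fun i => pi0car (X i)))|apply ps_to_epi; auto].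
      * apply (conv_rw (pi0ps (X j)) (push (pi0proj (X j)) V) _ (pi0proj (X j) x));
          [exact E|apply (upd_same (T := fun i => pi0car (X i)))|auto].
    + assert (E : push (fun y => y i) (push fst (push m R3)) = push (fun y => y i) (push fst R)).
      { rewrite <- s3. apply setsys_ext; intro A. unfold push, m; simpl.
        assert (Ef : (fun x : X j * ((forall i, pi0car (X i)) * tpt Y) =>
                        A (upd (T := fun i => pi0car (X i)) (fst (snd x)) j (pi0proj (X j) (fst x)) i))
                     = (fun x => A (fst (snd x) i))).
        { apply functional_extensionality; intro q; rewrite upd_other; auto. }
        rewrite Ef. tauto. }
      destruct (Hi i (fun e => n (eq_sym e))) as [h1 h2].
      split; intro h.
      * apply (conv_rw (pi0epi (X i)) (push (fun y : forall x : J, pi0car (X x) => y i) (push fst R)) _ (fst w i));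
          [exact E|apply (upd_other (T := fun i => pi0car (X i))); exact n|auto].
      * apply (conv_rw (pi0ps (X i)) (push (fun y : forall x : J, pi0car (X x) => y i) (push fst R)) _ (fst w i));
          [exact E|apply (upd_other (T := fun i => pi0car (X i))); exact n|auto].
  - apply (conv_rw (topPs Y) (push snd R) _ (snd w)); auto. rewrite <- s3. reflexivity.
Qed.

Lemma good_step {J} (X : J -> PsSpace) Y Z F S (j : J) :
  (forall i, PsAxioms (X i)) -> TopAxioms Z -> goodS X Y Z F S -> goodS X Y Z F (fun i => S i \/ i = j).
Proof.
  intros hX hZ hg R p t HR [hu sc] hy.
  destruct (proj1 (sc j) (or_intror eq_refl)) as [_ H].
  destruct (H _ (Sj_ax X Y Z F S j hg) (Sj_epi X Y Z F S j hg hZ) (Sj_cont X Y Z F S j hg hX)) as [_ [_ C]].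
  assert (cW : conv (Wsp X Y S j) R (p, t)).
  { split; auto. split; auto. intros i n. destruct (sc i) as [h1 h2]. split; intro h.
    - apply h1; auto.
    - apply h2. intros [a|a]; auto. }
  pose proof (C R (p, t) (ult_filter _ HR) (ultra_fconv (Wsp X Y S j) R (p, t) HR cW)) as C2.
  apply fconv_ultra; [apply ultra_push; auto|].
  replace (Phi X Y Z F (p, t)) with (proj1_sig (Psi X Y Z F S j hg (p j)) (p, t)).
  2:{ simpl. unfold Psif. simpl. rewrite (upd_id (T := fun i => pi0car (X i))). reflexivity. }
  apply (fconv_mono _ _ _ _) with (2 := C2).
  intros T [A [B [hA [hB hAB]]]]. unfold push in hA |- *.
  apply (fmono R _ _ (ult_filter _ HR)) with (2 := fand R _ _ (ult_filter _ HR) hA hB).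
  intros [q s] [a b]. pose proof (hAB _ _ a b) as r. simpl in r. unfold Psif in r; simpl in r.
  rewrite (upd_id (T := fun i => pi0car (X i))) in r. exact r.
Qed.

Lemma good_final {J} (X : J -> PsSpace) (Y Z : TopSpace) F S U y :
  goodS X Y Z F S -> (forall i, S i) -> conv (prodPs (fun i => pi0epi (X i))) U y ->
  conv (fspace (topPs Y) (topPs Z)) (push F U) (F y).
Proof.
  intros hg hS [HU hc]. split; [apply ultra_push; auto|]. intros G t hG hfc.
  apply lemmaL; [apply filter_push, ult_filter; auto|exact hG|]. intros R HR hGR RZ HRZ fin.
  assert (fin2 : finer (push (Phi X Y Z F) (prodF U R)) RZ).
  { intros T [A [B [hA [hB hAB]]]]. apply fin.
    exists (fun f => exists u, A u /\ F u = f), B. split; [|split; auto].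
    - unfold push. apply (fmono U A); [apply ult_filter; auto| |auto]. intros u a; exists u; auto.
    - intros a b [u [Au <-]] Bb. exact (hAB u b Au Bb). }
  destruct (lift_push (Phi X Y Z F) (prodF U R) RZ (filter_prodF _ _ (ult_filter _ HU) (ult_filter _ HR)) HRZ fin2)
    as [R2 [HR2 [hUR E2]]].
  assert (f2 : push fst R2 = U).
  { apply (ultra_sub_eq U (push fst R2)); auto. apply ultra_push; auto.
    intros A hA; apply hUR. exists A, (fun _ => True). split; auto; split; [apply ftrue, ult_filter; auto|]. auto. }
  assert (s2 : push snd R2 = R).
  { apply (ultra_sub_eq R (push snd R2)); auto. apply ultra_push; auto.
    intros A hA; apply hUR. exists (fun _ => True), A. split; [apply ftrue, ult_filter; auto|split; auto]. }
  rewrite <- E2. apply (hg R2 y t HR2).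
  - assert (K : sconv X S U y).
    { split; auto. intro i; split; [intros _; exact (hc i)|intro n; exfalso; apply n, hS]. }
    rewrite <- f2 in K. exact K.
  - assert (K : conv (topPs Y) R t) by (apply hfc; auto). rewrite <- s2 in K. exact K.
Qed.

Lemma s_rw {A} (s : setsys A -> A -> Prop) U U' x x' : U = U' -> x = x' -> s U x -> s U' x'.
Proof. intros -> ->; auto. Qed.

Lemma part2 : forall (n : nat) (X : { k : nat | (k < n)%nat } -> PsSpace),
     (forall i, PsAxioms (X i) /\ is_epitop (X i)) ->
     exists phi : pi0epi (prodPs X) -> prodPs (fun i => pi0epi (X i)),
       (forall x : prodPs X,
          phi (pi0proj (prodPs X) x) = (fun i => pi0proj (X i) (x i))) /\
       ps_iso (pi0epi (prodPs X)) (prodPs (fun i => pi0epi (X i))) phi.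
Proof.
  intros n X hX'. assert (hX : forall i, PsAxioms (X i)) by (intro i; apply hX').
  exists (phim X). split; [intro x; apply phim_eq; auto|].
  exists (gm X). split; [intro; apply gm_phim; auto|split; [intro; apply phim_gm; auto|split]].
  - intros U c [HU H]. split; [apply ultra_push; auto|]. intro i.
    split; [apply ultra_push, ultra_push; auto|]. intros s hs he hc.
    set (s' := fun (V : setsys (pi0car (prodPs X))) d => is_ultra V /\ s (push (fun d => phim X d i) V) (phim X d i)).
    assert (A1 : PsAxioms {| pt := pi0car (prodPs X); conv := s' |}).
    { split; [intros V d [h _]; exact h|]. intro d. split; [apply ultra_principal|]. apply (proj2 hs). }
    assert (A2 : is_epitop {| pt := pi0car (prodPs X); conv := s' |}).
    { destruct he as [I [Yk [Zk [h [hT hiff]]]]].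
      exists I, Yk, Zk, (fun k d => h k (phim X d i)). split; auto. intros V d. split.
      - intros [HV Hs]. pose proof (proj1 (hiff _ _) Hs) as [_ Hk]. split; auto.
      - intros [HV Hk]. split; auto. apply (proj2 (hiff _ _)). split; [apply ultra_push; auto|exact Hk]. }
    assert (A3 : continuous (prodPs X) {| pt := pi0car (prodPs X); conv := s' |} (pi0proj (prodPs X))).
    { intros V x cv. split; [apply ultra_push; exact (proj1 cv)|].
      assert (E : push (fun d => phim X d i) (push (pi0proj (prodPs X)) V) = push (pi0proj (X i)) (push (fun z => z i) V)).
      { apply setsys_ext; intro A. unfold push.
        assert (Ef : (fun x0 : prodPs X => A (phim X (pi0proj (prodPs X) x0) i)) = (fun x0 => A (pi0proj (X i) (x0 i)))).
        { apply functional_extensionality; intro z. rewrite phim_eq; auto. }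
        rewrite Ef. tauto. }
      refine (s_rw s _ _ _ _ (eq_sym E) _ (hc _ _ (proj2 cv i))).
      rewrite phim_eq; auto. }
    exact (proj2 (H s' A1 A2 A3)).
  - intros U y Hc. destruct Hc as [HU hc]. split; [apply ultra_push; auto|]. intros s hs he hcont.
    destruct he as [I [Yk [Zk [h [hT hiff]]]]]. apply (proj2 (hiff _ _)). split; [apply ultra_push, ultra_push; auto|].
    intro k. set (F := fun y => h k (gm X y)).
    assert (Fc : forall V x, conv (prodPs X) V x ->
      conv (fspace (topPs (Yk k)) (topPs (Zk k))) (push (fun x => F (Qm X x)) V) (F (Qm X x))).
    { intros V x cv. pose proof (proj1 (hiff _ _) (hcont V x cv)) as [_ Hk]. specialize (Hk k).
      unfold F. rewrite gm_Q.
      assert (E : push (fun x => h k (gm X (Qm X x))) V = push (h k) (push (pi0proj (prodPs X)) V)).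
      { apply setsys_ext; intro A. unfold push.
        assert (Ef : (fun x0 : prodPs X => A (h k (gm X (Qm X x0)))) = (fun x0 => A (h k (pi0proj (prodPs X) x0)))).
        { apply functional_extensionality; intro z. rewrite gm_Q; auto. }
        rewrite Ef. tauto. }
      rewrite E. exact Hk. }
    assert (hg : forall m, goodS X (Yk k) (Zk k) F (fun i => proj1_sig i < m)).
    { induction m as [|m IH].
      - apply (good_ext _ _ _ _ (fun _ => False)); [intro i; split; [intros []|lia]|].
        apply good_base; auto.
      - destruct (Compare_dec.lt_dec m n) as [l|l].
        + apply (good_ext _ _ _ _ (fun i => proj1_sig i < m \/ i = exist _ m l)).
          * intros [i hi]; simpl. split.
            -- intros [a|e]; [lia|]. injection e; lia.
            -- intro a. destruct (Compare_dec.lt_dec i m) as [b|b]; [left; auto|right]. apply sig_eq; simpl; lia.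
          * apply good_step; auto. apply (hT k).
        + apply (good_ext _ _ _ _ (fun i => proj1_sig i < m)); auto.
          intros [i hi]; simpl; lia. }
    apply (good_final X (Yk k) (Zk k) F (fun i => proj1_sig i < n)); auto.
    + intros [i hi]; simpl; auto.
    + split; auto.
Qed.

Theorem proposition4p1 :
  (forall (J : Type) (X : J -> PsSpace),
     (forall j, PsAxioms (X j)) ->
     exists phi : pi0ps (prodPs X) -> prodPs (fun j => pi0ps (X j)),
       (forall x : prodPs X,
          phi (pi0proj (prodPs X) x) = (fun j => pi0proj (X j) (x j))) /\
       ps_iso (pi0ps (prodPs X)) (prodPs (fun j => pi0ps (X j))) phi)
  /\
  (forall (n : nat) (X : { k : nat | (k < n)%nat } -> PsSpace),
     (forall i, PsAxioms (X i) /\ is_epitop (X i)) ->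
     exists phi : pi0epi (prodPs X) -> prodPs (fun i => pi0epi (X i)),
       (forall x : prodPs X,
          phi (pi0proj (prodPs X) x) = (fun i => pi0proj (X i) (x i))) /\
       ps_iso (pi0epi (prodPs X)) (prodPs (fun i => pi0epi (X i))) phi).
Proof.
  split; [exact part1|exact part2].
Qed.
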